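(* Consider the Variance-shifting Procedure described in the context, with the variance metric of model (I), i.e. $\mathcal{F}(\bar f)=\mathcal{E}$ for every $\bar f$, so $\Delta(\bar f,s^2)=\sum_{ij\in\mathcal{E}}\Delta_{ij}(s^2_{ij})$ with each $\Delta_{ij}$ convex and nondecreasing. Let $\Delta^*=\min\{\Delta(\bar f,\mathbf{V}(\mathcal{A})):(\bar f,\mathcal{A})\text{ compatible}\}$. If the procedure stops at Step 5 of iteration $k$, then $\Delta(\bar f^{k-1},s^2_{k-1})=\Delta^*$.
   Context: Network (DC model): bus set $\mathcal{B}$, $n=|\mathcal{B}|$; line set $\mathcal{E}$, $m=|\mathcal{E}|$; each line $ij$ has susceptance $b_{ij}>0$ and limit $f^{\max}_{ij}>0$. $B$ is the $n\times n$ bus susceptance matrix; $\hat B$ is $B$ with last row and column removed (assumed invertible); $\breve B=\begin{pmatrix}\hat B^{-1}&0\\0&0\end{pmatrix}$ with $i$-th row $\breve B_i$; $\pi_{ij}=\breve B_i^T-\breve B_j^T$. $\mathcal{G}\subseteq\mathcal{B}$ is the set of generator buses, with limits $p_i^{\min}\le p_i^{\max}$ and costs $c_i(p)=c_{i0}p^2+c_{i1}p+c_{i2}$, $c_{i0}\ge 0$. $d\in\mathbb{R}^n$ are loads, $\mu\in\mathbb{R}^n$ mean stochastic injections, $\omega$ a zero-mean random vector with covariance $\Omega$. $\mathcal{K}$ is a given convex set of $n\times n$ participation matrices $\mathcal{A}$ (with rows $\mathcal{A}_i$). Safety parameters $\nu_{ij}\ge0$ (lines) and $\nu_i\ge0$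 (generators) are given. For a matrix $\mathcal{A}$, $\mathbf{V}(\mathcal{A})\in\mathbb{R}^m$ has entries $\mathbf{V}(\mathcal{A})_{ij}=b_{ij}^2\pi_{ij}^T(I-\mathcal{A})\Omega(I-\mathcal{A}^T)\pi_{ij}$ (line flow variances). Compatibility: a pair $(\bar f,\mathcal{A})$ with $\bar f\in\mathbb{R}^m$ is compatible if $\mathcal{A}\in\mathcal{K}$ and there exist $\bar p\in\mathbb{R}^n$ (with $\bar p_i=0$ for $i\notin\mathcal{G}$) and $\bar\theta\in\mathbb{R}^n$ with $B\bar\theta=\bar p+\mu-d$; $\bar f_{ij}=b_{ij}(\bar\theta_i-\bar\theta_j)$ and $|\bar f_{ij}|+\nu_{ij}\sqrt{\mathbf{V}(\mathcal{A})_{ij}}\le f^{\max}_{ij}$ for all $ij\in\mathcal{E}$; and $p_i^{\min}+\nu_i\sqrt{\mathcal{A}_i^T\Omega\mathcal{A}_i}\le\bar p_i\le p_i^{\max}-\nu_i\sqrt{\mathcal{A}_i^T\Omega\mathcal{A}_i}$ for all $i\in\mathcal{G}$ (i.e. they extend to a feasible solution of the safety-constrained DC-OPF, whose objective is $\sum_{i\in\mathcal{G}}[c_{i0}(\bar p_i^2+\mathcal{A}_i^T\Omega\mathcal{A}_i)+c_{i1}\bar p_i+c_{i2}]$). Variance metric (general form): for each line $ij$ a convex nondecreasing function $\Delta_{ij}:[0,\infty)\to[0,\infty)$, and a set $\mathcal{F}(\bar f)\subseteq\mathcal{E}$; $\Delta(\bar f,s^2)=\sum_{ij\in\mathcal{F}(\bar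 f)}\Delta_{ij}(s^2_{ij})$. Subproblems. For $\hat{\mathcal{A}}\in\mathcal{K}$ and $0<\tau<1$, $\mathrm{Reroute}(\hat{\mathcal{A}},\tau)$ is: minimize $\sum_{i\in\mathcal{G}}[c_{i0}(\bar p_i^2+\hat{\mathcal{A}}_i^T\Omega\hat{\mathcal{A}}_i)+c_{i1}\bar p_i+c_{i2}]$ over $\bar p,\bar f,\bar\theta$ subject to $B\bar\theta=\bar p+\mu-d$, $\bar f_{ij}=b_{ij}(\bar\theta_i-\bar\theta_j)$, $|\bar f_{ij}|+\nu_{ij}\sqrt{\mathbf{V}(\hat{\mathcal{A}})_{ij}}\le(1-\tau)f^{\max}_{ij}$ for all $ij\in\mathcal{E}$, and the generator constraints above with $\hat{\mathcal{A}}$. For $\bar f'$, $\mathcal{A}'$, let $\mathbf{T}(\bar f',\mathcal{A}',\tau)=\{ij\in\mathcal{E}:|\bar f'_{ij}|+\nu_{ij}\sqrt{\mathbf{V}(\mathcal{A}')_{ij}}\ge(1-\tau)f^{\max}_{ij}\}$. $\mathrm{VShift}(\bar f',\mathcal{A}',\tau)$ is: minimize $\sum_{ij\in\mathcal{F}(\bar f')}\Delta_{ij}(s_{ij}^2)$ over $s\in\mathbb{R}^m_{\ge0}$, $\mathcal{A}$ subject to $\mathcal{A}\in\mathcal{K}$, $s_{ij}^2\ge\mathbf{V}(\mathcal{A})_{ij}$ for all $ij\in\mathcal{E}$, and $|\bar f'_{ij}|+\nu_{ij}s_{ij}\le f^{\max}_{ij}$ for $ij\in\mathbf{T}(\bar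 f',\mathcal{A}',\tau)$. Variance-shifting Procedure. Input: a feasible solution $(\bar p^0,\bar f^0,\mathcal{A}_0)$ of the safety-constrained problem (so $(\bar f^0,\mathcal{A}_0)$ is compatible), the metric $\Delta$, $0<\tau<1$, and an iteration bound $N\ge1$; set $s^2_0=\mathbf{V}(\mathcal{A}_0)$. For $k=1,\dots,N$: (1) solve $\mathrm{Reroute}(\mathcal{A}_{k-1},\tau)$; if infeasible, stop; else let $(\bar p^k,\bar f^k,\bar\theta^k)$ be an optimal solution. (2) Solve $\mathrm{VShift}(\bar f^k,\mathcal{A}_{k-1},\tau)$, with optimal solution $(\hat s_k,\hat{\mathcal{A}}_k)$. (3) Choose the largest $\lambda\in(0,1]$ such that $(\bar f^k,(1-\lambda)\mathcal{A}_{k-1}+\lambda\hat{\mathcal{A}}_k)$ is compatible. (4) Set $\mathcal{A}_k=(1-\lambda)\mathcal{A}_{k-1}+\lambda\hat{\mathcal{A}}_k$ and $s^2_k=\mathbf{V}(\mathcal{A}_k)$. (5) If $\Delta(\bar f^k,s^2_k)\ge\Delta(\bar f^{k-1},s^2_{k-1})$, stop; otherwise reset $\tau\leftarrow\tau/2$ and continue. *)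

(* Defs.v *)
From HB Require Import structures.
From mathcomp Require Import all_boot all_order all_algebra.
From mathcomp Require Export reals.
Set Implicit Arguments. Unset Strict Implicit. Unset Printing Implicit Defensive.
Import Order.TTheory GRing.Theory Num.Theory.
Local Open Scope ring_scope.

(* DC network data: n.+1 buses ('I_n.+1, the last one ord_max is the one
   removed in \hat B), m lines ('I_m); line e goes from bus lfrom e to lto e. *)
Record dcnet (R : realType) (n m : nat) := DCNet {
  lfrom : 'I_m -> 'I_n.+1;
  lto : 'I_m -> 'I_n.+1;
  susc : 'I_m -> R;
  fmax : 'I_m -> R;
  gens : {set 'I_n.+1};
  pmin : 'I_n.+1 -> R;
  pmax : 'I_n.+1 -> R;
  cq : 'I_n.+1 -> R;
  cl : 'I_n.+1 -> R;
  cc : 'I_n.+1 -> R;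
  load : 'cV[R]_n.+1;
  mu : 'cV[R]_n.+1;                (* mean stochastic injections *)
  Omega : 'M[R]_n.+1;              (* covariance of omega *)
  Kset : 'M[R]_n.+1 -> Prop;       (* convex set K of participation matrices *)
  nu_line : 'I_m -> R;
  nu_gen : 'I_n.+1 -> R
}.

Definition convex_mxset (R : realType) (n : nat) (K : 'M[R]_n -> Prop) : Prop :=
  forall (A B : 'M[R]_n) (t : R), K A -> K B -> 0 <= t -> t <= 1 ->
    K ((1 - t) *: A + t *: B).

Section Net.
Variables (R : realType) (n m : nat) (N : dcnet R n m).

Definition incid (e : 'I_m) (i : 'I_n.+1) : R :=
  (lfrom N e == i)%:R - (lto N e == i)%:R.

Definition Bmat : 'M[R]_n.+1 :=
  \matrix_(i, j) \sum_(e < m) susc N e * incid e i * incid e j.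

Definition hatB : 'M[R]_n :=
  \matrix_(i, j) Bmat (widen_ord (leqnSn n) i) (widen_ord (leqnSn n) j).

Definition breveB : 'M[R]_n.+1 :=
  \matrix_(i, j) match unlift ord_max i, unlift ord_max j with
                 | Some i', Some j' => invmx hatB i' j'
                 | _, _ => 0 end.

Definition piv (e : 'I_m) : 'cV[R]_n.+1 :=
  (row (lfrom N e) breveB - row (lto N e) breveB)^T.

Definition Vvar (A : 'M[R]_n.+1) (e : 'I_m) : R :=
  susc N e ^+ 2 * ((piv e)^T *m (1 - A) *m Omega N *m (1 - A^T) *m piv e) 0 0.

Definition gvar (A : 'M[R]_n.+1) (i : 'I_n.+1) : R :=
  (row i A *m Omega N *m (row i A)^T) 0 0.

Definition dc_flow (p : 'cV[R]_n.+1) (f : 'I_m -> R) (theta : 'cV[R]_n.+1) : Prop :=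
  Bmat *m theta = p + mu N - load N /\
  forall e, f e = susc N e * (theta (lfrom N e) 0 - theta (lto N e) 0).

Definition gen_only (p : 'cV[R]_n.+1) : Prop :=
  forall i, i \notin gens N -> p i 0 = 0.

Definition gen_ok (A : 'M[R]_n.+1) (p : 'cV[R]_n.+1) : Prop :=
  forall i, i \in gens N ->
    pmin N i + nu_gen N i * Num.sqrt (gvar A i) <= p i 0 /\
    p i 0 <= pmax N i - nu_gen N i * Num.sqrt (gvar A i).

Definition line_ok (A : 'M[R]_n.+1) (f : 'I_m -> R) (scale : R) : Prop :=
  forall e, `|f e| + nu_line N e * Num.sqrt (Vvar A e) <= scale * fmax N e.

Definition sc_feasible (p : 'cV[R]_n.+1) (f : 'I_m -> R) (A : 'M[R]_n.+1) : Prop :=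
  Kset N A /\ gen_only p /\ (exists theta, dc_flow p f theta) /\
  line_ok A f 1 /\ gen_ok A p.

Definition compatible (f : 'I_m -> R) (A : 'M[R]_n.+1) : Prop :=
  exists p, sc_feasible p f A.

Definition cost (A : 'M[R]_n.+1) (p : 'cV[R]_n.+1) : R :=
  \sum_(i in gens N) (cq N i * (p i 0 ^+ 2 + gvar A i) + cl N i * p i 0 + cc N i).

Definition reroute_feasible (A : 'M[R]_n.+1) (tau : R)
  (p : 'cV[R]_n.+1) (f : 'I_m -> R) (theta : 'cV[R]_n.+1) : Prop :=
  gen_only p /\ dc_flow p f theta /\ line_ok A f (1 - tau) /\ gen_ok A p.

Definition reroute_opt (A : 'M[R]_n.+1) (tau : R)
  (p : 'cV[R]_n.+1) (f : 'I_m -> R) (theta : 'cV[R]_n.+1) : Prop :=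
  reroute_feasible A tau p f theta /\
  forall p' f' theta', reroute_feasible A tau p' f' theta' -> cost A p <= cost A p'.

Definition tight (f' : 'I_m -> R) (A' : 'M[R]_n.+1) (tau : R) (e : 'I_m) : bool :=
  (1 - tau) * fmax N e <= `|f' e| + nu_line N e * Num.sqrt (Vvar A' e).

Definition metric (F : ('I_m -> R) -> {set 'I_m}) (Delta : 'I_m -> R -> R)
  (f : 'I_m -> R) (s2 : 'I_m -> R) : R :=
  \sum_(e in F f) Delta e (s2 e).

Definition vshift_feasible (f' : 'I_m -> R) (A' : 'M[R]_n.+1) (tau : R)
  (s : 'I_m -> R) (A : 'M[R]_n.+1) : Prop :=
  (forall e, 0 <= s e) /\ Kset N A /\ (forall e, Vvar A e <= s e ^+ 2) /\
  (forall e, tight f' A' tau e -> `|f' e| + nu_line N e * s e <= fmax N e).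

Definition vshift_opt (F : ('I_m -> R) -> {set 'I_m}) (Delta : 'I_m -> R -> R)
  (f' : 'I_m -> R) (A' : 'M[R]_n.+1) (tau : R) (s : 'I_m -> R) (A : 'M[R]_n.+1) : Prop :=
  vshift_feasible f' A' tau s A /\
  forall s2 A2, vshift_feasible f' A' tau s2 A2 ->
    metric F Delta f' (fun e => s e ^+ 2) <= metric F Delta f' (fun e => s2 e ^+ 2).

End Net.

Record net_hyp (R : realType) (n m : nat) (N : dcnet R n m) : Prop := {
  lines_nonloop : forall e, lfrom N e != lto N e;
  susc_pos : forall e, 0 < susc N e;
  fmax_pos : forall e, 0 < fmax N e;
  pmin_le_pmax : forall i, i \in gens N -> pmin N i <= pmax N i;
  cq_ge0 : forall i, i \in gens N -> 0 <= cq N i;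
  Omega_sym : (Omega N)^T = Omega N;
  Omega_psd : forall v : 'cV[R]_n.+1, 0 <= (v^T *m Omega N *m v) 0 0;
  hatB_inv : hatB N \in unitmx;
  K_convex : convex_mxset (Kset N);
  nu_line_ge0 : forall e, 0 <= nu_line N e;
  nu_gen_ge0 : forall i, 0 <= nu_gen N i
}.

Definition metric_fun_hyp (R : realType) (Dl : R -> R) : Prop :=
  (forall x, 0 <= x -> 0 <= Dl x) /\
  (forall x y, 0 <= x -> x <= y -> Dl x <= Dl y) /\
  (forall x y t, 0 <= x -> 0 <= y -> 0 <= t -> t <= 1 ->
     Dl ((1 - t) * x + t * y) <= (1 - t) * Dl x + t * Dl y).

Definition F_I (R : realType) (m : nat) : ('I_m -> R) -> {set 'I_m} :=
  fun _ => [set: 'I_m].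

Definition mixA (R : realType) (n : nat) (A B : 'M[R]_n) (l : R) : 'M[R]_n :=
  (1 - l) *: A + l *: B.

Definition tau_at (R : realType) (tau0 : R) (j : nat) : R := tau0 / 2 ^+ j.-1.

Definition is_min_value (R : realType) (P : R -> Prop) (x : R) : Prop :=
  P x /\ forall y, P y -> x <= y.

(* Main.v *)
Require Import Defs.
From HB Require Import structures.
From mathcomp Require Import all_boot all_order all_algebra.
From mathcomp Require Import reals.
From mathcomp Require Import ring lra.
Import Order.TTheory GRing.Theory Num.Theory.
Local Open Scope ring_scope.

Section Aux.
Variables (R : realType) (n m : nat) (N : dcnet R n m).

Definition Bf (x y : 'cV[R]_n.+1) : R := (x^T *m Omega N *m y) 0 0.

Lemma BfDl a b x y z : Bf (a *: x + b *: y) z = a * Bf x z + b * Bf y z.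
Proof.
rewrite /Bf linearD !linearZ /= !mulmxDl -!scalemxAl !mxE.
by [].
Qed.

Lemma BfDr a b x y z : Bf z (a *: x + b *: y) = a * Bf z x + b * Bf z y.
Proof.
rewrite /Bf !mulmxDr -!scalemxAr !mxE.
by [].
Qed.

Lemma Bf_conv (t : R) x y :
  Bf ((1 - t) *: x + t *: y) ((1 - t) *: x + t *: y) =
  (1 - t) * Bf x x + t * Bf y y - t * (1 - t) * Bf (x - y) (x - y).
Proof.
have -> : x - y = 1 *: x + (-1) *: y by rewrite scale1r scaleN1r.
rewrite !BfDl !BfDr. ring.
Qed.

Lemma Vvar_q A e : Vvar N A e = susc N e ^+ 2 * Bf ((1 - A^T) *m piv N e) ((1 - A^T) *m piv N e).
Proof.
have t1 : (1 : 'M[R]_n.+1)^T = 1 by apply/matrixP=> i j; rewrite !mxE eq_sym.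
rewrite /Vvar /Bf; set p := piv N e.
rewrite trmx_mul !mulmxA; congr (_ * (_ *m _ *m _ *m _ *m _) 0 0); apply/matrixP=> i j; rewrite !mxE eq_sym.
by [].
Qed.

Hypothesis H : net_hyp N.

Lemma Bf_ge0 x : 0 <= Bf x x.
Proof. exact: (Omega_psd H). Qed.

Lemma Vvar_ge0 A e : 0 <= Vvar N A e.
Proof. rewrite Vvar_q; apply: mulr_ge0; [exact: sqr_ge0 | exact: Bf_ge0]. Qed.

Lemma Vvar_conv A0 A1 t e : 0 <= t -> t <= 1 ->
  Vvar N (mixA A0 A1 t) e <= (1 - t) * Vvar N A0 e + t * Vvar N A1 e.
Proof.
move=> t0 t1.
rewrite !Vvar_q.
have -> : (1 - (mixA A0 A1 t)^T) *m piv N e =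
  (1 - t) *: ((1 - A0^T) *m piv N e) + t *: ((1 - A1^T) *m piv N e).
  rewrite !scalemxAl -mulmxDl; congr (_ *m _).
  apply/matrixP => i j; rewrite !mxE; ring.
rewrite Bf_conv.
have := Bf_ge0 ((1 - A0^T) *m piv N e - (1 - A1^T) *m piv N e).
have : 0 <= susc N e ^+ 2 by exact: sqr_ge0.
set b := susc N e ^+ 2; set q := Bf _ _ => hb hq.
have : 0 <= b * (t * (1 - t) * q) by apply: mulr_ge0 => //; apply: mulr_ge0 => //; apply: mulr_ge0; lra.
lra.
Qed.

Variable Delta : 'I_m -> R -> R.
Hypothesis HD : forall e, metric_fun_hyp (Delta e).

Lemma D_mono (f f' : 'I_m -> R) (s1 s2 : 'I_m -> R) :
  (forall e, 0 <= s1 e) -> (forall e, s1 e <= s2 e) ->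
  metric (@F_I R m) Delta f s1 <= metric (@F_I R m) Delta f' s2.
Proof.
move=> h0 h1; rewrite /metric /F_I; apply: ler_sum => e _.
by have [_ [hm _]] := HD e; apply: hm.
Qed.

Lemma D_conv A0 A1 t (f f0 f1 : 'I_m -> R) : 0 <= t -> t <= 1 ->
  metric (@F_I R m) Delta f (Vvar N (mixA A0 A1 t)) <=
  (1 - t) * metric (@F_I R m) Delta f0 (Vvar N A0) +
  t * metric (@F_I R m) Delta f1 (Vvar N A1).
Proof.
move=> t0 t1; rewrite /metric /F_I !mulr_sumr -big_split /=.
apply: ler_sum => e _.
have [_ [hm hc]] := HD e.
apply: le_trans (hc _ _ _ (Vvar_ge0 A0 e) (Vvar_ge0 A1 e) t0 t1).
apply: hm; first exact: Vvar_ge0.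
exact: Vvar_conv.
Qed.
End Aux.
Arguments Vvar_ge0 {R n m N}.
Arguments Vvar_conv {R n m N}.
Arguments D_conv {R n m N}.
Arguments D_mono {R m Delta}.

Theorem theorem1 (R : realType) (n m : nat) (N : dcnet R n m)
  (Delta : 'I_m -> R -> R) (tau0 : R) (Nit k : nat)
  (pbar : nat -> 'cV[R]_n.+1) (fbar : nat -> 'I_m -> R)
  (theta : nat -> 'cV[R]_n.+1) (shat : nat -> 'I_m -> R)
  (Ahat : nat -> 'M[R]_n.+1) (lam : nat -> R) (Aseq : nat -> 'M[R]_n.+1) :
  net_hyp N ->
  (forall e, metric_fun_hyp (Delta e)) ->
  0 < tau0 -> tau0 < 1 ->
  (1 <= k)%N -> (k <= Nit)%N ->
  (* input: a feasible solution of the safety-constrained problem *)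
  sc_feasible N (pbar 0%N) (fbar 0%N) (Aseq 0%N) ->
  (* iterations j = 1..k executed Steps 1-4 *)
  (forall j, (1 <= j)%N -> (j <= k)%N ->
     reroute_opt N (Aseq j.-1) (tau_at tau0 j) (pbar j) (fbar j) (theta j) /\
     vshift_opt N (@F_I R m) Delta (fbar j) (Aseq j.-1) (tau_at tau0 j)
       (shat j) (Ahat j) /\
     (0 < lam j /\ lam j <= 1) /\
     compatible N (fbar j) (mixA (Aseq j.-1) (Ahat j) (lam j)) /\
     (forall l, lam j < l -> l <= 1 ->
        ~ compatible N (fbar j) (mixA (Aseq j.-1) (Ahat j) l)) /\
     Aseq j = mixA (Aseq j.-1) (Ahat j) (lam j)) ->
  (* iterations j = 1..k-1 did not stop at Step 5 *)
  (forall j, (1 <= j)%N -> (j < k)%N ->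
     metric (@F_I R m) Delta (fbar j) (Vvar N (Aseq j)) <
     metric (@F_I R m) Delta (fbar j.-1) (Vvar N (Aseq j.-1))) ->
  (* the procedure stops at Step 5 of iteration k *)
  metric (@F_I R m) Delta (fbar k.-1) (Vvar N (Aseq k.-1)) <=
  metric (@F_I R m) Delta (fbar k) (Vvar N (Aseq k)) ->
  is_min_value
    (fun y => exists f A, compatible N f A /\ y = metric (@F_I R m) Delta f (Vvar N A))
    (metric (@F_I R m) Delta (fbar k.-1) (Vvar N (Aseq k.-1))).
Proof.
move=> H HD tau0p tau0l k1 kN feas0 Hit Hnostop Hstop.
have [Hro [Hvs [[lp l1] [Hcomp [_ HAk]]]]] := Hit k k1 (leqnn k).
set tau := tau_at tau0 k.
have tau_pos : 0 < tau by rewrite /tau /tau_at divr_gt0 // exprn_gt0.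
have tau_le1 : tau <= 1.
  rewrite /tau /tau_at ler_pdivrMr ?exprn_gt0 // mul1r.
  apply: le_trans (ltW tau0l) _; apply: exprn_ege1; lra.
set A0 := Aseq k.-1.
have Hmem : compatible N (fbar k.-1) A0.
  rewrite /A0; case Ek: k.-1 => [|j]; first by exists (pbar 0%N).
  have hj : (j.+1 <= k)%N by rewrite -Ek leq_pred.
  have [_ [_ [_ [Hc [_ ->]]]]] := Hit j.+1 (ltn0Sn j) hj.
  exact: Hc.
have KA0 : Kset N A0 by have [p [KA _]] := Hmem.
split; first by exists (fbar k.-1), A0.
move=> y [f [A [[p Hf] ->]]].
rewrite leNgt; apply/negP => Hlt.
have [KA [_ [_ [HlA _]]]] := Hf.
have [_ [_ [Hline _]]] := Hro.1.
set t := tau ^+ 2.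
have t0 : 0 < t by rewrite /t exprn_gt0.
have t1 : t <= 1 by rewrite /t; nra.
set At := mixA A0 A t.
have vf : vshift_feasible N (fbar k) A0 tau (fun e => Num.sqrt (Vvar N At e)) At.
  split; first by move=> e; exact: sqrtr_ge0.
  split; first by apply: (K_convex H) => //; exact: ltW.
  split; first by move=> e; rewrite sqr_sqrtr // (Vvar_ge0 H).
  move=> e _.
  have hq := Vvar_conv H A0 A t e (ltW t0) t1.
  have V0 := Vvar_ge0 H A0 e; have V1 := Vvar_ge0 H A e; have Vt := Vvar_ge0 H At e.
  have nu0 := nu_line_ge0 H e.
  have F0 := fmax_pos H e.
  have hl0 := Hline e; have hl1 := HlA e.
  have s0 := sqr_sqrtr V0; have s1 := sqr_sqrtr V1; have st := sqr_sqrtr Vt.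
  have q0 := sqrtr_ge0 (Vvar N A0 e); have q1 := sqrtr_ge0 (Vvar N A e);
  have qt := sqrtr_ge0 (Vvar N At e).
  move: hq hl0 hl1 s0 s1 st q0 q1 qt.
  rewrite -/At.
  set v0 := Vvar N A0 e; set v1 := Vvar N A e; set vt := Vvar N At e.
  set r0 := Num.sqrt v0; set r1 := Num.sqrt v1; set rt := Num.sqrt vt.
  set nu := nu_line N e; set F := fmax N e.
  have a1 : (0:R) <= `|f e| := normr_ge0 _.
  have a0 : (0:R) <= `|fbar k e| := normr_ge0 _.
  set x0 := `|fbar k e|; set x1 := `|f e|.
  move=> hq hl0 hl1 s0 s1 st q0 q1 qt.
  have a1' : 0 <= x1 by rewrite /x1 normr_ge0.
  have a0' : 0 <= x0 by rewrite /x0 normr_ge0.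
  have F0' : 0 < F by exact: (fmax_pos H e).
  have nu0' : 0 <= nu by exact: (nu_line_ge0 H e).
  have u0 : 0 <= nu * r0 by exact: mulr_ge0.
  have u1 : 0 <= nu * r1 by exact: mulr_ge0.
  have ut : 0 <= nu * rt by exact: mulr_ge0.
  have hl0' : x0 + nu * r0 <= (1 - tau) * F := hl0.
  have hl1' : x1 + nu * r1 <= 1 * F := hl1.
  have e0 : (nu * r0) ^+ 2 <= ((1 - tau) * F - x0) ^+ 2.
    have hh : nu * r0 <= (1 - tau) * F - x0 by lra.
    have : 0 <= ((1 - tau) * F - x0 - nu * r0) * ((1 - tau) * F - x0 + nu * r0).
      by apply: mulr_ge0; lra.
    nra.
  have e1 : (nu * r1) ^+ 2 <= F ^+ 2.
    have : 0 <= (F - nu * r1) * (F + nu * r1). by apply: mulr_ge0; lra.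
    nra.
  have et : (nu * rt) ^+ 2 <= (1 - t) * (nu * r0) ^+ 2 + t * (nu * r1) ^+ 2.
    rewrite !exprMn s0 s1 st.
    have : nu ^+ 2 * vt <= nu ^+ 2 * ((1 - t) * v0 + t * v1).
      by apply: ler_wpM2l => //; exact: sqr_ge0.
    lra.
  have et2 : (nu * rt) ^+ 2 <= ((1 - tau) * F - x0 + tau * F) ^+ 2.
    have hA : 0 <= (1 - tau) * F - x0 by lra.
    set a := (1 - tau) * F - x0 in e0 hA *.
    have h1 : (1 - t) * (nu * r0) ^+ 2 <= (1 - t) * a ^+ 2 by apply: ler_wpM2l => //; lra.
    have h2 : t * (nu * r1) ^+ 2 <= t * F ^+ 2 by apply: ler_wpM2l => //; lra.
    have h3 : 0 <= tau ^+ 2 * a ^+ 2 + 2 * a * tau * F.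
      apply: addr_ge0; first by apply: mulr_ge0; exact: sqr_ge0.
      apply: mulr_ge0; last lra. apply: mulr_ge0; last lra. lra.
    have h4 : (a + tau * F) ^+ 2 = (1 - t) * a ^+ 2 + t * F ^+ 2 + (tau ^+ 2 * a ^+ 2 + 2 * a * tau * F).
      rewrite /t; ring.
    rewrite h4; lra.
  have : nu * rt <= (1 - tau) * F - x0 + tau * F.
    have hA : 0 <= (1 - tau) * F - x0 + tau * F by nra.
    nra.
  lra.
have Hs := Hvs.2 _ _ vf.
have c1 : metric (@F_I R m) Delta (fbar k) (fun e => Num.sqrt (Vvar N At e) ^+ 2)
          = metric (@F_I R m) Delta (fbar k) (Vvar N At).
  rewrite /metric; apply: eq_bigr => e _; by rewrite sqr_sqrtr // (Vvar_ge0 H).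
have c2 := D_conv H Delta HD A0 A t (fbar k) (fbar k.-1) f (ltW t0) t1.
have [_ [_ [hV _]]] := Hvs.1.
have c3 : metric (@F_I R m) Delta (fbar k) (Vvar N (Ahat k)) <=
          metric (@F_I R m) Delta (fbar k) (fun e => shat k e ^+ 2).
  apply: D_mono => // e; exact: (Vvar_ge0 H).
have c4 := D_conv H Delta HD A0 (Ahat k) (lam k) (fbar k) (fbar k.-1) (fbar k) (ltW lp) l1.
rewrite -HAk in c4.
have e1 : metric (@F_I R m) Delta (fbar k) (Vvar N A0) = metric (@F_I R m) Delta (fbar k.-1) (Vvar N A0) by [].
rewrite c1 in Hs.
move: Hstop Hs c2 c3 c4 Hlt.
rewrite -/A0.
move: (metric _ _ (fbar k.-1) (Vvar N A0)) => DA0.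
move: (metric _ _ (fbar k) (Vvar N (Aseq k))) => DAk.
move: (metric _ _ (fbar k) (Vvar N At)) => DAt.
move: (metric _ _ (fbar k) (Vvar N (Ahat k))) => DAh.
move: (metric _ _ f (Vvar N A)) => DA.
move: (metric _ _ (fbar k) (fun e => shat k e ^+ 2)) => Ds.
move=> h1 h2 h3 h4 h5 h6.
have h7 : DAh < DA0.
  have : t * DA < t * DA0 by rewrite ltr_pM2l.
  lra.
have : lam k * DAh < lam k * DA0 by rewrite ltr_pM2l.
lra.
Qed.
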